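(* Let $p:C\to G$ be a normal covering of a connected graph $G$ with deck transformation group $\mathcal{D}$, let $\mathcal{T}=(T,(V_t)_{t\in T})$ be a regular $\mathcal{D}$-canonical tree-decomposition of $C$, and let $\mathcal{H}=(H,(G_h)_{h\in H})$ be defined from $\mathcal{T}$ via $p$ as in the context. Then $\mathcal{H}$ is an honest graph-decomposition of $G$.
   Context: Graphs may have loops and parallel edges and are viewed as 1-complexes; covering spaces are connected. A tree-decomposition $(T,(V_t))$ of $C$ ($T$ a tree, $V_t\subseteq V(C)$ non-empty) satisfies $C=\bigcup_tC[V_t]$ and $\{t:v\in V_t\}$ induces a connected subtree for every vertex $v$. Each edge $t_1t_2$ of $T$ induces the separation $\{\bigcup_{s\in T_1}V_s,\bigcup_{s\in T_2}V_s\}$ ($T_i$ the component of $T-t_1t_2$ containing $t_i$); the decomposition is regular if no such separation has a side equal to $V(C)$. It is $\mathcal{D}$-canonical if there is a group homomorphism $\varphi\mapsto(\varphi,\psi_\varphi)$ from $\mathcal{D}$ to pairs with $\psi_\varphi$ an automorphism of $T$ and $\varphi(V_t)=V_{\psi_\varphi(t)}$ for all $t$; for regular decompositions $\psi_\varphi$ is unique, giving an action of $\mathcal{D}$ on $T$. Construction: $H=T/\mathcal{D}$ is the orbit graph (vertices the $\mathcal{D}$-orbits of nodes, edges the orbits of edges, the orbit of an edge joining the orbits of its endpoints), and $G_h=p(C[V_t])$ for any $t\in h$ (independent of choice). A graph-decomposition of $G$ is a pair $(H,(G_h))$ with subgraphs $G_h\subseteq G$, $G=\bigcup_hG_h$,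 and $H[\{h:v\in G_h\}]$ connected for each vertex $v$; it is honest if $G_h\cap G_{h'}\neq\emptyset$ for every edge $hh'$ of $H$. *)

(* Defs.v *)
(* Graphs (possibly infinite, with loops and parallel edges)
   are encoded as 1-complexes via darts (oriented half-edges): each edge is
   an orbit {d, rev d} of the fixed-point-free involution rev, and
   tl d is the vertex at which dart d starts.  A loop at v is an edge with
   two distinct darts both starting at v. *)
From Stdlib Require Import List.
Import ListNotations.
Set Implicit Arguments.

Record graph := Graph {
  gV : Type;
  gD : Type;
  gtl : gD -> gV;
  grev : gD -> gD;
  grev_inv : forall d, grev (grev d) = d;
  grev_nofix : forall d, grev d <> d }.

Fixpoint walk (X : Type) (R : X -> X -> Prop) (x : X) (l : list X) (y : X)
  : Prop :=
  match l with
  | [] => x = y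
  | z :: l' => R x z /\ walk R z l' y
  end.

Definition reach (X : Type) (R : X -> X -> Prop) (x y : X) : Prop :=
  exists l, walk R x l y.

Definition gadj (G : graph) (u w : gV G) : Prop :=
  exists d, gtl G d = u /\ gtl G (grev G d) = w.

Definition connected_graph (G : graph) : Prop :=
  forall u w : gV G, reach (@gadj G) u w.

Definition bij (A B : Type) (f : A -> B) : Prop :=
  exists g : B -> A, (forall x, g (f x) = x) /\ (forall y, f (g y) = y).

Definition ghom (C G : graph) (fV : gV C -> gV G) (fD : gD C -> gD G) : Prop :=
  (forall d, gtl G (fD d) = fV (gtl C d)) /\
  (forall d, fD (grev C d) = grev G (fD d)).

Definition covering (C G : graph) (pV : gV C -> gV G) (pD : gD C -> gD G)
  : Prop :=
  connected_graph C /\ ghom C G pV pD /\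
  (forall w, exists v, pV v = w) /\
  (forall v (d' : gD G), gtl G d' = pV v ->
     exists d, (gtl C d = v /\ pD d = d') /\
       forall e, gtl C e = v -> pD e = d' -> e = d).

Definition deck (C G : graph) (pV : gV C -> gV G) (pD : gD C -> gD G)
  (fV : gV C -> gV C) (fD : gD C -> gD C) : Prop :=
  bij fV /\ bij fD /\ ghom C C fV fD /\
  (forall v, pV (fV v) = pV v) /\ (forall d, pD (fD d) = pD d).

Definition normal_covering (C G : graph) (pV : gV C -> gV G)
  (pD : gD C -> gD G) : Prop :=
  covering C G pV pD /\
  forall v w, pV v = pV w ->
    exists fV fD, deck C G pV pD fV fD /\ fV v = w.

Definition has_cycle (N : Type) (adj : N -> N -> Prop) : Prop :=
  exists x l y, walk adj x l y /\ adj y x /\ NoDup (x :: l) /\ 2 <= length l.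

Definition is_tree (N : Type) (adj : N -> N -> Prop) : Prop :=
  (forall s t, adj s t -> adj t s) /\ (forall s, ~ adj s s) /\
  (forall s t, reach adj s t) /\ ~ has_cycle adj.

Definition tree_aut (N : Type) (adj : N -> N -> Prop) (f : N -> N) : Prop :=
  bij f /\ forall s t, adj s t <-> adj (f s) (f t).

Definition tree_decomposition (C : graph) (N : Type) (adj : N -> N -> Prop)
  (Vt : N -> gV C -> Prop) : Prop :=
  is_tree adj /\
  (forall t, exists v, Vt t v) /\
  (forall v, exists t, Vt t v) /\
  (forall d, exists t, Vt t (gtl C d) /\ Vt t (gtl C (grev C d))) /\
  (forall v t1 t2, Vt t1 v -> Vt t2 v ->
     reach (fun a b => adj a b /\ Vt a v /\ Vt b v) t1 t2).

Definition adj_minus (N : Type) (adj : N -> N -> Prop) (t1 t2 : N)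
  (a b : N) : Prop :=
  adj a b /\ ~ (a = t1 /\ b = t2) /\ ~ (a = t2 /\ b = t1).

(* the side  U_{s in T_1} V_s  of the separation induced by edge t1t2,
   T_1 the component of T - t1t2 containing t1 *)
Definition sep_side (C : graph) (N : Type) (adj : N -> N -> Prop)
  (Vt : N -> gV C -> Prop) (t1 t2 : N) (v : gV C) : Prop :=
  exists s, reach (adj_minus adj t1 t2) t1 s /\ Vt s v.

Definition regular_td (C : graph) (N : Type) (adj : N -> N -> Prop)
  (Vt : N -> gV C -> Prop) : Prop :=
  forall t1 t2, adj t1 t2 ->
    (exists v, ~ sep_side C adj Vt t1 t2 v) /\
    (exists v, ~ sep_side C adj Vt t2 t1 v).

(* psi witnesses that the decomposition is D-canonical: a homomorphism
   phi |-> (phi, psi_phi) from the deck group into pairs *)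
Definition canonical_witness (C G : graph) (pV : gV C -> gV G)
  (pD : gD C -> gD G) (N : Type) (adj : N -> N -> Prop)
  (Vt : N -> gV C -> Prop)
  (psi : (gV C -> gV C) -> (gD C -> gD C) -> N -> N) : Prop :=
  (forall fV fD, deck C G pV pD fV fD ->
     tree_aut adj (psi fV fD) /\
     forall t w, Vt (psi fV fD t) w <-> exists v, Vt t v /\ fV v = w) /\
  (forall fV1 fD1 fV2 fD2, deck C G pV pD fV1 fD1 -> deck C G pV pD fV2 fD2 ->
     forall t, psi (fun v => fV1 (fV2 v)) (fun d => fD1 (fD2 d)) t
               = psi fV1 fD1 (psi fV2 fD2 t)).

Definition D_canonical (C G : graph) (pV : gV C -> gV G)
  (pD : gD C -> gD G) (N : Type) (adj : N -> N -> Prop)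
  (Vt : N -> gV C -> Prop) : Prop :=
  exists psi, canonical_witness C G pV pD adj Vt psi.

Definition same_orbit (C G : graph) (pV : gV C -> gV G) (pD : gD C -> gD G)
  (N : Type) (psi : (gV C -> gV C) -> (gD C -> gD C) -> N -> N)
  (t s : N) : Prop :=
  exists fV fD, deck C G pV pD fV fD /\ psi fV fD t = s.

Definition is_orbit (C G : graph) (pV : gV C -> gV G) (pD : gD C -> gD G)
  (N : Type) (psi : (gV C -> gV C) -> (gD C -> gD C) -> N -> N)
  (h : N -> Prop) : Prop :=
  exists t, forall s, h s <-> same_orbit C G pV pD psi t s.

Definition orbitV (C G : graph) (pV : gV C -> gV G) (pD : gD C -> gD G)
  (N : Type) (psi : (gV C -> gV C) -> (gD C -> gD C) -> N -> N) : Type :=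
  { h : N -> Prop | is_orbit C G pV pD psi h }.

Definition orbit_adj (C G : graph) (pV : gV C -> gV G) (pD : gD C -> gD G)
  (N : Type) (adj : N -> N -> Prop)
  (psi : (gV C -> gV C) -> (gD C -> gD C) -> N -> N)
  (h h' : orbitV C G pV pD psi) : Prop :=
  exists s s', adj s s' /\ proj1_sig h s /\ proj1_sig h' s'.

(* G_h = p(C[V_t]) for t in h: vertex set and dart set *)
Definition partV (C G : graph) (pV : gV C -> gV G) (pD : gD C -> gD G)
  (N : Type) (psi : (gV C -> gV C) -> (gD C -> gD C) -> N -> N)
  (Vt : N -> gV C -> Prop) (h : orbitV C G pV pD psi) (w : gV G) : Prop :=
  exists t, proj1_sig h t /\ exists v, Vt t v /\ pV v = w.

Definition partD (C G : graph) (pV : gV C -> gV G) (pD : gD C -> gD G)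
  (N : Type) (psi : (gV C -> gV C) -> (gD C -> gD C) -> N -> N)
  (Vt : N -> gV C -> Prop) (h : orbitV C G pV pD psi) (e : gD G) : Prop :=
  exists t, proj1_sig h t /\
    exists d, Vt t (gtl C d) /\ Vt t (gtl C (grev C d)) /\ pD d = e.

Definition graph_decomposition (G : graph) (Hv : Type)
  (Hadj : Hv -> Hv -> Prop) (GV : Hv -> gV G -> Prop)
  (GD : Hv -> gD G -> Prop) : Prop :=
  (forall h d, GD h d -> GV h (gtl G d) /\ GD h (grev G d)) /\
  (forall w, exists h, GV h w) /\
  (forall d, exists h, GD h d) /\
  (forall w h1 h2, GV h1 w -> GV h2 w ->
     reach (fun a b => Hadj a b /\ GV a w /\ GV b w) h1 h2).

Definition honest (G : graph) (Hv : Type) (Hadj : Hv -> Hv -> Prop)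
  (GV : Hv -> gV G -> Prop) (GD : Hv -> gD G -> Prop) : Prop :=
  graph_decomposition G Hadj GV GD /\
  forall h h', Hadj h h' -> exists w, GV h w /\ GV h' w.

(* Main.v *)
Require Import Defs.
From Stdlib Require Import List Classical FunctionalExtensionality PropExtensionality ProofIrrelevance.
Import ListNotations.

Lemma walk_cross (X : Type) (R : X -> X -> Prop) (P : X -> Prop) :
  forall l x y, walk R x l y -> P x -> ~ P y ->
  exists a b, R a b /\ P a /\ ~ P b.
Proof.
  induction l as [|z l IH]; simpl; intros x y W Px Py.
  - subst; contradiction.
  - destruct W as [Rxz W].
    destruct (classic (P z)) as [Pz|Pz].
    + exact (IH z y W Pz Py).
    + exists x, z; auto.
Qed.

Lemma walk_snoc (X : Type) (R : X -> X -> Prop) :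
  forall l x y z, walk R x l y -> R y z -> walk R x (l ++ [z]) z.
Proof.
  induction l as [|a l IH]; simpl; intros x y z W Ryz.
  - subst; auto.
  - destruct W; split; eauto.
Qed.

Lemma walk_map (X Y : Type) (R : X -> X -> Prop) (S : Y -> Y -> Prop) (f : X -> Y) :
  (forall a b, R a b -> S (f a) (f b)) ->
  forall l x y, walk R x l y -> walk S (f x) (map f l) (f y).
Proof.
  intros HRS; induction l as [|a l IH]; simpl; intros x y W.
  - subst; auto.
  - destruct W; split; eauto.
Qed.

Arguments walk_cross {X R P} l {x y}.
Arguments walk_snoc {X R} l {x y z}.
Arguments walk_map {X Y R S f}.

Lemma deck_id (C G : graph) (pV : gV C -> gV G) (pD : gD C -> gD G) :
  deck C G pV pD (fun v => v) (fun d => d).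
Proof.
  unfold deck, bij, ghom.
  split; [exists (fun v => v); auto|].
  split; [exists (fun v => v); auto|].
  repeat split; auto.
Qed.

Lemma deck_comp (C G : graph) (pV : gV C -> gV G) (pD : gD C -> gD G) fV1 fD1 fV2 fD2 :
  deck C G pV pD fV1 fD1 -> deck C G pV pD fV2 fD2 ->
  deck C G pV pD (fun v => fV1 (fV2 v)) (fun d => fD1 (fD2 d)).
Proof.
  unfold deck, bij, ghom.
  intros [[g1 [g1a g1b]] [[h1 [h1a h1b]] [[t1 r1] [p1 q1]]]]
         [[g2 [g2a g2b]] [[h2 [h2a h2b]] [[t2 r2] [p2 q2]]]].
  split; [exists (fun v => g2 (g1 v)); split; intros; congruence|].
  split; [exists (fun v => h2 (h1 v)); split; intros; congruence|].
  repeat split; intros; congruence.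
Qed.

Lemma deck_inv (C G : graph) (pV : gV C -> gV G) (pD : gD C -> gD G) fV fD :
  deck C G pV pD fV fD ->
  exists gV0 gD0, deck C G pV pD gV0 gD0 /\ (forall v, gV0 (fV v) = v)
     /\ (forall v, fV (gV0 v) = v) /\ (forall d, gD0 (fD d) = d).
Proof.
  unfold deck, bij, ghom.
  intros [[g [ga gb]] [[h [ha hb]] [[t r] [p q]]]].
  exists g, h.
  split; [|split; [|split]; auto].
  split; [exists fV; split; auto|].
  split; [exists fD; split; auto|].
  split; [split|split].
  - intro d. rewrite <- (ga (gtl C (h d))). rewrite <- t. rewrite hb. reflexivity.
  - intro d. rewrite <- (ha (grev C (h d))). rewrite r. rewrite hb. reflexivity.
  - intro v. rewrite <- (p (g v)). rewrite gb. reflexivity.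
  - intro d. rewrite <- (q (h d)). rewrite hb. reflexivity.
Qed.

Theorem lemma3p9 (C G : graph) (pV : gV C -> gV G) (pD : gD C -> gD G)
  (N : Type) (adj : N -> N -> Prop) (Vt : N -> gV C -> Prop)
  (psi : (gV C -> gV C) -> (gD C -> gD C) -> N -> N) :
  connected_graph G ->
  normal_covering C G pV pD ->
  tree_decomposition C adj Vt ->
  regular_td C adj Vt ->
  canonical_witness C G pV pD adj Vt psi ->
  honest G (@orbit_adj C G pV pD N adj psi)
    (@partV C G pV pD N psi Vt) (@partD C G pV pD N psi Vt).
Proof.
  intros _ [[Cconn [[hom1 hom2] [surj lift]]] normal]
    [Ttree [bagne [vcov [dcov bagconn]]]] reg [cw1 cw2].
  assert (psi_id : forall t, psi (fun v => v) (fun d => d) t = t).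
  { intro t.
    pose proof (cw2 _ _ _ _ (deck_id C G pV pD) (deck_id C G pV pD) t) as E.
    cbv beta in E.
    destruct (cw1 _ _ (deck_id C G pV pD)) as [[[g [ga gb]] _] _].
    pose proof (f_equal g E) as E2. rewrite !ga in E2. symmetry; exact E2. }
  assert (so_refl : forall t, same_orbit C G pV pD psi t t).
  { intro t. exists (fun v => v), (fun d => d). split; [apply deck_id|apply psi_id]. }
  assert (so_trans : forall a b c, same_orbit C G pV pD psi a b ->
            same_orbit C G pV pD psi b c -> same_orbit C G pV pD psi a c).
  { intros a b c [f1 [g1 [D1 E1]]] [f2 [g2 [D2 E2]]].
    exists (fun v => f2 (f1 v)), (fun d => g2 (g1 d)).
    split; [apply deck_comp; auto|]. rewrite cw2; auto. congruence. }
  assert (so_sym : forall a b, same_orbit C G pV pD psi a b ->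
            same_orbit C G pV pD psi b a).
  { intros a b [f [g [D E]]].
    destruct (deck_inv _ _ _ _ _ _ D) as [fi [gi [Di [fia [_ gia]]]]].
    exists fi, gi. split; [exact Di|].
    rewrite <- E. rewrite <- cw2; auto.
    replace (fun v => fi (f v)) with (fun v : gV C => v) by (apply functional_extensionality; auto).
    replace (fun d => gi (g d)) with (fun d : gD C => d) by (apply functional_extensionality; auto).
    apply psi_id. }
  set (orb := fun t : N => exist (is_orbit C G pV pD psi) (same_orbit C G pV pD psi t)
                 (ex_intro _ t (fun s => iff_refl _)) : orbitV C G pV pD psi).
  assert (orbit_eq : forall (h : orbitV C G pV pD psi) t, proj1_sig h t -> h = orb t).
  { intros [P [t0 HP]] t Pt. simpl in Pt.
    assert (EP : P = same_orbit C G pV pD psi t).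
    { apply functional_extensionality; intro s; apply propositional_extensionality.
      rewrite HP. apply HP in Pt. split; intro X; eauto. }
    subst P. unfold orb. f_equal. apply proof_irrelevance. }
  assert (adhesion : forall s s', adj s s' -> exists v, Vt s v /\ Vt s' v).
  { intros s s' Hss. apply NNPP; intro Hno.
    destruct (reg s s' Hss) as [[b Hb] _].
    destruct (bagne s) as [a Ha].
    assert (Aa : sep_side C adj Vt s s' a) by (exists s; split; [exists []; reflexivity|exact Ha]).
    destruct (Cconn a b) as [l Wl].
    destruct (walk_cross _ Wl Aa Hb) as [u [w [[d [du dw]] [Au Aw]]]].
    destruct (dcov d) as [t [Vtu Vtw]]. rewrite du in Vtu. rewrite dw in Vtw.
    destruct Au as [r [[lr Wr] Vru]].
    destruct (bagconn u r t Vru Vtu) as [l2 W2].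
    assert (Nt : ~ reach (adj_minus adj s s') s t).
    { intros [l3 W3]. apply Aw. exists t; split; auto. exists l3; auto. }
    destruct (walk_cross (P := reach (adj_minus adj s s') s) _ W2 (ex_intro _ lr Wr) Nt)
      as [x [y [[Axy [Vx Vy]] [[lx Wx] Ny]]]].
    apply Hno.
    destruct (classic (x = s /\ y = s')) as [[-> ->]|n1]; [exists u; auto|].
    destruct (classic (x = s' /\ y = s)) as [[-> ->]|n2]; [exists u; auto|].
    exfalso. apply Ny. exists (lx ++ [y]). eapply walk_snoc; eauto. split; auto. }
  split; [split; [|split; [|split]]|].
  -
    intros h e [t [Ht [d [V1 [V2 E]]]]]. subst e. split.
    + exists t; split; auto. exists (gtl C d); split; auto.
    + exists t; split; auto. exists (grev C d). rewrite grev_inv. auto.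
  - intro w. destruct (surj w) as [v Hv]. destruct (vcov v) as [t Ht].
    exists (orb t). exists t. split; [apply so_refl|]. eauto.
  - intro e. destruct (surj (gtl G e)) as [v Hv].
    destruct (lift v e (eq_sym Hv)) as [d [[dv de] _]].
    destruct (dcov d) as [t [H1 H2]].
    exists (orb t). exists t. split; [apply so_refl|]. eauto.
  - intros w h1 h2 [t1 [H1 [v1 [V1 E1]]]] [t2 [H2 [v2 [V2 E2]]]].
    destruct (normal v1 v2 (eq_trans E1 (eq_sym E2))) as [f [g [Dfg fv]]].
    destruct (cw1 f g Dfg) as [_ Hb].
    set (t1' := psi f g t1).
    assert (V1' : Vt t1' v2) by (apply Hb; eauto).
    rewrite (orbit_eq h1 t1 H1), (orbit_eq h2 t2 H2).
    assert (Eo : orb t1 = orb t1').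
    { apply orbit_eq. simpl. exists f, g; auto. }
    rewrite Eo.
    destruct (bagconn v2 t1' t2 V1' V2) as [l W].
    exists (map orb l).
    refine (walk_map _ _ _ _ W).
    intros a b [Aab [Va Vb]]. split; [|split].
    + exists a, b. split; auto. split; apply so_refl.
    + exists a. split; [apply so_refl|]. eauto.
    + exists b. split; [apply so_refl|]. eauto.
  - intros h h' [s [s' [Hss [Hs Hs']]]].
    destruct (adhesion s s' Hss) as [v [Vs Vs']].
    exists (pV v). split; [exists s|exists s']; split; eauto.
Qed.
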